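(* Let $k$ be a positive integer and let $L$ be a link with $\det L\neq 0$ admitting non-trivial $(2k+1)$-colorings. If $S\subseteq\{0,1,2,\dots,k\}\subseteq \mathbf{Z}/(2k+1)\mathbf{Z}$, then $S$ is not a $(2k+1)$-sufficient set of colors for $L$.
   Context: For a positive integer $n$, an $n$-coloring of a link diagram is an assignment of an element of $\mathbf{Z}/n\mathbf{Z}$ to each arc such that at every crossing, with over-arc color $b$ and under-arc colors $a,c$, $2b-a-c\equiv 0\pmod n$; it is non-trivial if at least two distinct colors are used. An $n$-sufficient set of colors for $L$ is a set of residues mod $n$ such that some diagram of $L$ admits a non-trivial $n$-coloring using only colors from this set. $\det L$ denotes the determinant of the link $L$. *)

(* Defs.v *)
From HB Require Import structures.
From mathcomp Require Import all_boot all_order all_algebra.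
Set Implicit Arguments. Unset Strict Implicit. Unset Printing Implicit Defensive.
Import Order.TTheory GRing.Theory Num.Theory.
Local Open Scope ring_scope.

(* Combinatorial data of a link diagram with n.+1 crossings and n.+1 arcs
   (arcs and crossings both indexed by 'I_n.+1).  Crossing x has over-arc
   [dover x] and under-arcs [dunder1 x], [dunder2 x]. *)
Record diagram := Diagram {
  dn : nat;
  dover : 'I_dn.+1 -> 'I_dn.+1;
  dunder1 : 'I_dn.+1 -> 'I_dn.+1;
  dunder2 : 'I_dn.+1 -> 'I_dn.+1 }.

(* An n-coloring (n >= 2, so 'Z_n is Z/nZ): 2b - a - c = 0 at every crossing. *)
Definition is_coloring (n : nat) (D : diagram) (col : 'I_(dn D).+1 -> 'Z_n) :=
  forall x : 'I_(dn D).+1,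
    2%:R * col (dover x) - col (dunder1 x) - col (dunder2 x) = 0.

Definition nontrivial_coloring (n : nat) (D : diagram)
    (col : 'I_(dn D).+1 -> 'Z_n) :=
  is_coloring col /\ exists a b, col a <> col b.

Definition coloring_matrix (D : diagram) : 'M[int]_((dn D).+1) :=
  \matrix_(i, j) ((2 * (j == dover i)%:Z) - (j == dunder1 i)%:Z
                   - (j == dunder2 i)%:Z).

Definition diagram_det (D : diagram) : nat :=
  `|\det (row' ord0 (col' ord0 (coloring_matrix D)))|%N.

(* S is an n-sufficient set of colors for the link whose diagrams are [Diags]. *)
Definition sufficient_set (n : nat) (Diags : diagram -> Prop) (S : {set 'Z_n}) :=
  exists D : diagram, Diags D /\
    exists col : 'I_(dn D).+1 -> 'Z_n,
      nontrivial_coloring col /\ forall x, col x \in S.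

(* Main.v *)
Require Import Defs.
From mathcomp Require Import all_boot all_order all_algebra.
From mathcomp Require Import zify.
Import GRing.Theory Num.Theory.
Local Open Scope ring_scope.

Lemma lift_eq (k : nat) (x y z : 'Z_(2 * k + 1)) : (0 < k)%N ->
  (val x <= k)%N -> (val y <= k)%N -> (val z <= k)%N ->
  (2%:R * y - x - z = 0)%R -> (2 * val y = val x + val z)%N.
Proof.
move=> k0 hx hy hz.
have p1 : (1 < 2 * k + 1)%N by lia.
move=> H.
have : (2 * val y)%:R = (val x + val z)%:R :> 'Z_(2 * k + 1).
  rewrite natrM natrD !natr_Zp; apply/eqP; rewrite -subr_eq0 opprD addrA; exact/eqP.
move/(congr1 (@nat_of_ord _)); rewrite (val_Zp_nat p1) (val_Zp_nat p1) !modn_small //; lia.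
Qed.

Lemma sum_ind (n : nat) (a : 'I_n) (u : 'I_n -> int) :
  (\sum_j ((j == a)%:Z * u j) = u a)%R.
Proof.
rewrite (bigD1 a) //= eqxx mul1r big1 ?addr0 // => j /negbTE ->.
by rewrite mul0r.
Qed.

Lemma det_zero (k : nat) (D : diagram) (col : 'I_(dn D).+1 -> 'Z_(2 * k + 1)) :
  (0 < k)%N -> nontrivial_coloring col -> (forall x, val (col x) <= k)%N ->
  diagram_det D = 0%N.
Proof.
move=> k0 [hc [a [b hab]]] hk.
set v : 'I_(dn D).+1 -> int := fun j => (val (col j))%:Z.
have row0 : forall i, (\sum_j coloring_matrix D i j * v j = 0)%R.
  move=> i.
  have := @lift_eq k _ _ _ k0 (hk (dunder1 i)) (hk (dover i)) (hk (dunder2 i)) (hc i).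
  rewrite /coloring_matrix.
  under eq_bigr => j _ do rewrite mxE !mulrBl -mulrA.
  rewrite !sumrB -mulr_sumr !sum_ind /v => h.
  lia.
have rowsum : forall i, (\sum_j coloring_matrix D i j = 0)%R.
  move=> i; rewrite /coloring_matrix.
  under eq_bigr => j _ do rewrite mxE -[X in X - _ - _]mulr1 -[X in _ - X - _]mulr1
     -[X in _ - _ - X]mulr1 -mulrA.
  rewrite !sumrB -mulr_sumr !(sum_ind _ _ (fun _ => 1%R)). lia.
set A := row' ord0 (col' ord0 (coloring_matrix D)).
set w : 'cV[int]_(dn D) := \col_j (v (lift ord0 j) - v ord0)%R.
have Aw : (A *m w = 0)%R.
  apply/matrixP => i j; rewrite !mxE.
  have := row0 (lift ord0 i); have := rowsum (lift ord0 i).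
  rewrite big_ord_recl /= big_ord_recl /= => h1 h2.
  have -> : (\sum_i0 A i i0 * w i0 j = \sum_i0 coloring_matrix D (lift ord0 i) (lift ord0 i0) * v (lift ord0 i0) - v ord0 * \sum_i0 coloring_matrix D (lift ord0 i) (lift ord0 i0))%R.
    rewrite mulr_sumr -sumrB; apply: eq_bigr => l _.
    by rewrite !mxE mulrBr [v ord0 * _]mulrC.
  have e1 : (\sum_i0 coloring_matrix D (lift ord0 i) (lift ord0 i0) = - coloring_matrix D (lift ord0 i) ord0)%R.
    by apply/eqP; rewrite -addr_eq0 addrC h1.
  have e2 : (\sum_i0 coloring_matrix D (lift ord0 i) (lift ord0 i0) * v (lift ord0 i0) = - (coloring_matrix D (lift ord0 i) ord0 * v ord0))%R.
    by apply/eqP; rewrite -addr_eq0 addrC h2.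
  rewrite e1 e2 mulrN opprK mulrC; exact: addNr.
have [j wj] : exists j, (w j 0 != 0)%R.
  have [c [hc0 hc1]] : exists c, c != ord0 /\ col c <> col ord0.
    case: (eqVneq (col a) (col ord0)) => ha.
      exists b; split; last by move=> hb; apply: hab; rewrite ha hb.
      by apply/eqP => hb; apply: hab; rewrite ha hb.
    exists a; split; [apply/eqP => ha0; by rewrite ha0 eqxx in ha | exact/eqP].
  case: (unliftP ord0 c) hc0 hc1 => [j -> _ hne|-> ]; last by rewrite eqxx.
  exists j; rewrite mxE subr_eq0 /v; apply/negP => /eqP [] /val_inj; exact: hne.
have : (\det A *: w = 0)%R by rewrite -mul_scalar_mx -mul_adj_mx -mulmxA Aw mulmx0.
move: wj; rewrite mxE => wj.
move/matrixP => /(_ j 0); rewrite !mxE => /eqP; rewrite mulf_eq0 (negbTE wj) orbF.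
by rewrite /diagram_det -/A => /eqP ->.
Qed.

Theorem theorem4p1 (k : nat) (Diags : diagram -> Prop) (detL : nat)
  (S : {set 'Z_(2 * k + 1)}) :
  (0 < k)%N ->
  (exists D, Diags D) ->
  (forall D, Diags D -> diagram_det D = detL) ->
  detL <> 0%N ->
  (exists D, Diags D /\ exists col : 'I_(dn D).+1 -> 'Z_(2 * k + 1),
                          nontrivial_coloring col) ->
  S \subset [set x : 'Z_(2 * k + 1) | (val x <= k)%N] ->
  ~ sufficient_set Diags S.
Proof.
move=> k0 _ hdet hL _ hS [D [hD [col [hc hin]]]].
apply: hL; rewrite -(hdet D hD); apply: (@det_zero k D col k0 hc) => x.
by have := subsetP hS _ (hin x); rewrite inE.
Qed.
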